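(* Let $0<c\le\tfrac12$. Suppose Skeptic starts with capital $\mathcal{K}_0=1$ and plays $\mathcal{P}_c$: $M_n=-c\,\overline{x}_{n-1}\mathcal{K}_{n-1}$ for all $n\ge1$. His capital is then \[ \mathcal{K}_n=\prod_{i=2}^n\bigl(1-c\,\overline{x}_{i-1}x_i\bigr). \] Then $\mathcal{K}_n(\xi)\ge0$ for all $\xi\in\Omega$ and all $n$. Moreover $\mathcal{K}_n(\xi)\to\infty$ for every path $\xi\notin E_1^c$, where \[ E_1^c:=\{\xi:\ \limsup_{n\to\infty}(1+2c)\sqrt n\,|\overline{x}_n|\ge1\}. \] That is, Skeptic can force $E_1^c$ with $\mathcal{P}_c$.
   Context: Fair-coin game: the initial capital is $\mathcal{K}_0$. In rounds $n=1,2,\dots$ Skeptic announces $M_n\in\mathbb{R}$ (depending only on $x_1,\dots,x_{n-1}$), then Reality announces $x_n\in\{-1,1\}$, and $\mathcal{K}_n:=\mathcal{K}_{n-1}+M_nx_n$. A path is an infinite sequence $\xi=x_1x_2\cdots\in\{-1,1\}^{\mathbb{N}}$, and $\Omega$ is the set of paths. We write $s_n:=x_1+\cdots+x_n$ and $\overline{x}_n:=s_n/n$, with $s_0=\overline{x}_0=0$. Skeptic forces an event $E$ if he has a strategy such that, starting from capital $1$, his capital is nonnegative at all times on all paths and tends to $\infty$ on every path not in $E$. *)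

(* Defs.v *)
From Stdlib Require Import Reals.
From Coquelicot Require Import Coquelicot.
Open Scope R_scope.

(* A path is x : nat -> R; only x 1, x 2, ... are used (x_n = x n for n >= 1);
   the hypothesis that x n is in {-1,1} for n >= 1 is put in the theorem. *)
Definition is_path (x : nat -> R) : Prop :=
  forall n : nat, (1 <= n)%nat -> x n = 1 \/ x n = -1.

Fixpoint psum (x : nat -> R) (n : nat) : R :=
  match n with
  | O => 0
  | S m => psum x m + x (S m)
  end.

Definition xbar (x : nat -> R) (n : nat) : R :=
  match n with
  | O => 0
  | _ => psum x n / INR n
  end.

(* Capital of Skeptic in the fair-coin game, K_0 = 1, playing P_c:
   M_n = - c * xbar_{n-1} * K_{n-1};  K_n = K_{n-1} + M_n * x_n. *)
Fixpoint capital (c : R) (x : nat -> R) (n : nat) : R :=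
  match n with
  | O => 1
  | S m => capital c x m + (- c * xbar x m * capital c x m) * x (S m)
  end.

Fixpoint prod_upto (f : nat -> R) (n : nat) : R :=
  match n with
  | O => 1
  | S m => prod_upto f m * f (S m)
  end.
Definition prod_range (a n : nat) (f : nat -> R) : R :=
  prod_upto (fun i => if Nat.leb a i then f i else 1) n.

(* Main.v *)
Require Import Defs.
From Stdlib Require Import Reals Lra Lia Psatz.
From Coquelicot Require Import Coquelicot.
Open Scope R_scope.

Lemma xsq (x : nat -> R) : is_path x -> forall i, (1 <= i)%nat -> x i * x i = 1.
Proof. intros Hp i Hi; destruct (Hp i Hi) as [H|H]; rewrite H; lra. Qed.

Lemma psum_bound (x : nat -> R) : is_path x -> forall n, Rabs (psum x n) <= INR n.
Proof.
  intros Hp n; induction n as [|n IH]; cbn [psum].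
  - simpl; rewrite Rabs_R0; lra.
  - rewrite S_INR. destruct (Hp (S n) ltac:(lia)) as [H|H]; rewrite H;
    apply Rabs_le_between in IH; apply Rabs_le; lra.
Qed.

Lemma xbar_eq (x : nat -> R) n : (1 <= n)%nat -> xbar x n = psum x n / INR n.
Proof. intros H; destruct n; [lia|reflexivity]. Qed.

Lemma xbar_bound (x : nat -> R) : is_path x -> forall n, Rabs (xbar x n) <= 1.
Proof.
  intros Hp n; destruct n as [|n].
  - simpl; rewrite Rabs_R0; lra.
  - rewrite xbar_eq by lia. pose proof (psum_bound x Hp (S n)).
    pose proof (pos_INR n). rewrite S_INR in *.
    unfold Rdiv; rewrite Rabs_mult, Rabs_inv, (Rabs_right (INR n + 1)) by lra.
    apply (Rmult_le_reg_r (INR n + 1)); [lra|].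
    rewrite Rmult_assoc, Rinv_l by lra; lra.
Qed.

Lemma factor_ge (c : R) (x : nat -> R) : 0 < c -> c <= 1/2 -> is_path x ->
  forall m, 1/2 <= 1 - c * xbar x m * x (S m).
Proof.
  intros hc0 hc1 Hp m.
  pose proof (xbar_bound x Hp m) as Hb. apply Rabs_le_between in Hb.
  destruct (Hp (S m) ltac:(lia)) as [H|H]; rewrite H; nra.
Qed.

Lemma cap_rec c x m : capital c x (S m) = capital c x m * (1 - c * xbar x m * x (S m)).
Proof. simpl; ring. Qed.

Lemma cap_pos (c : R) (x : nat -> R) : 0 < c -> c <= 1/2 -> is_path x ->
  forall n, 0 < capital c x n.
Proof.
  intros hc0 hc1 Hp n; induction n as [|n IH]; [simpl; lra|].
  rewrite cap_rec. pose proof (factor_ge c x hc0 hc1 Hp n). nra.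
Qed.

Lemma ln_lower (y : R) : -1/2 <= y <= 1/2 -> y - 2 * y^2 <= ln (1 + y).
Proof.
  intros Hy. set (t := y - 2*y^2).
  pose proof (exp_ineq1_le (-t)) as He. rewrite exp_Ropp in He.
  pose proof (exp_pos t).
  assert (Ht : 0 < 1 - t) by (unfold t; nra).
  assert (exp t <= 1 + y).
  { assert (exp t * (1 - t) <= 1).
    { apply (Rmult_le_reg_r (/ exp t)). apply Rinv_0_lt_compat; lra.
      rewrite Rmult_1_l. replace (exp t * (1 - t) * / exp t) with (1 - t)
        by (field; lra). lra. }
    assert (1 <= (1 + y) * (1 - t)).
    { replace ((1 + y) * (1 - t)) with (1 + y^2 * (1 + 2*y)) by (unfold t; ring).
      assert (0 <= y^2 * (1 + 2*y)) by (apply Rmult_le_pos; nra). lra. }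
    apply (Rmult_le_reg_r (1 - t)); lra. }
  rewrite <- (ln_exp t). apply ln_le; auto.
Qed.

Lemma ln_step (m : nat) : (1 <= m)%nat -> ln (INR (S m)) - ln (INR m) <= / INR m.
Proof.
  intros Hm. assert (0 < INR m) by (apply lt_0_INR; lia).
  rewrite S_INR. rewrite <- ln_div by lra.
  replace ((INR m + 1) / INR m) with (1 + / INR m) by (field; lra).
  pose proof (Rinv_0_lt_compat _ H).
  apply Rle_trans with (ln (exp (/ INR m))); [apply ln_le | rewrite ln_exp; lra].
  lra. apply exp_ineq1_le.
Qed.

Definition Phi (c : R) (x : nat -> R) (j : nat) : R := c / 2 * (INR j * xbar x j ^ 2).

Lemma step_ineq (c b : R) (x : nat -> R) (m : nat) : 0 < c -> c <= 1/2 -> b < 1 ->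
  is_path x -> (1 <= m)%nat ->
  (1 + 2*c)^2 * (INR (S m) * xbar x (S m) ^ 2) <= b ->
  (1 + 2*c)^2 * (INR m * xbar x m ^ 2) <= b ->
  Phi c x m - Phi c x (S m) + c/2*(1-b)*(ln (INR (S m)) - ln (INR m))
    <= ln (1 - c * xbar x m * x (S m)).
Proof.
  intros hc0 hc1 hb Hp Hm hA hB.
  set (y := - c * xbar x m * x (S m)).
  replace (1 - c * xbar x m * x (S m)) with (1 + y) by (unfold y; ring).
  assert (Hy : -1/2 <= y <= 1/2).
  { pose proof (xbar_bound x Hp m) as Hb. apply Rabs_le_between in Hb.
    unfold y; destruct (Hp (S m) ltac:(lia)) as [H|H]; rewrite H; split; nra. }
  pose proof (ln_lower y Hy) as Hl.
  assert (HM : 0 < INR m) by (apply lt_0_INR; lia).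
  set (A := INR (S m) * xbar x (S m) ^ 2) in *.
  set (B := INR m * xbar x m ^ 2) in *.
  assert (key : y - 2 * y^2 = Phi c x m - Phi c x (S m)
     + (c/2 - c/2*A - 2*c^2*B) * / INR m).
  { unfold y, A, B, Phi. rewrite (xbar_eq x (S m)) by lia. rewrite (xbar_eq x m) by lia.
    cbn [psum]. rewrite S_INR.
    destruct (Hp (S m) ltac:(lia)) as [H|H]; rewrite H; field; lra. }
  assert (HA : 0 <= A) by (unfold A; apply Rmult_le_pos; [apply pos_INR| nra]).
  assert (HB : 0 <= B) by (unfold B; apply Rmult_le_pos; [apply pos_INR| nra]).
  assert (hA' : (1 + 4*c) * A <= b) by nra.
  assert (hB' : (1 + 4*c) * B <= b) by nra.
  assert (Hc : c/2*A + 2*c^2*B <= c/2*b).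
  { apply (Rmult_le_reg_l (1 + 4*c)); [lra|].
    assert (c/2 * ((1+4*c)*A) <= c/2*b) by (apply Rmult_le_compat_l; lra).
    assert (2*c^2 * ((1+4*c)*B) <= 2*c^2*b) by (apply Rmult_le_compat_l; nra).
    nra. }
  pose proof (ln_step m Hm) as Hs.
  assert (Hinv : 0 < / INR m) by (apply Rinv_0_lt_compat; lra).
  assert (c/2*(1-b)*(ln (INR (S m)) - ln (INR m)) <= c/2*(1-b) * / INR m)
    by (apply Rmult_le_compat_l; [nra|lra]).
  assert (c/2*(1-b) * / INR m <= (c/2 - c/2*A - 2*c^2*B) * / INR m)
    by (apply Rmult_le_compat_r; lra).
  lra.
Qed.

Theorem lemma1 (c : R) (hc0 : 0 < c) (hc1 : c <= 1 / 2) :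
  (forall x : nat -> R, is_path x -> forall n : nat,
      capital c x n = prod_range 2 n (fun i => 1 - c * xbar x (i - 1) * x i))
  /\ (forall x : nat -> R, is_path x -> forall n : nat, 0 <= capital c x n)
  /\ (forall x : nat -> R, is_path x ->
      ~ Rbar_le (Finite 1)
          (LimSup_seq (fun n => (1 + 2 * c) * sqrt (INR n) * Rabs (xbar x n))) ->
      is_lim_seq (capital c x) p_infty).
Proof.
  split; [|split].
  - intros x Hp n; induction n as [|m IH]; [reflexivity|].
    rewrite cap_rec, IH. unfold prod_range; simpl prod_upto.
    f_equal. destruct m as [|m].
    + simpl. ring.
    + simpl Nat.leb. replace (S (S m) - 1)%nat with (S m) by lia. reflexivity.
  - intros x Hp n; left; apply cap_pos; auto.
  - intros x Hp Hnot.
    set (u := fun n => (1 + 2 * c) * sqrt (INR n) * Rabs (xbar x n)) in *.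
    assert (Hu0 : forall n, 0 <= u n).
    { intros n; unfold u. apply Rmult_le_pos; [apply Rmult_le_pos; [lra|apply sqrt_pos]|apply Rabs_pos]. }
    assert (Hq : exists q N0, q < 1 /\ forall n, (N0 <= n)%nat -> u n < q).
    { destruct (ex_LimSup_seq u) as [l Hl].
      rewrite (is_LimSup_seq_unique _ _ Hl) in Hnot.
      destruct l as [r| |]; simpl in Hnot.
      - assert (hr : r < 1) by lra.
        assert (he : 0 < (1 - r)/2) by lra.
        destruct (Hl (mkposreal _ he)) as [_ [N0 HN0]].
        exists (r + (1-r)/2), N0; split; [lra|]. intros n Hn; apply (HN0 n Hn).
      - exfalso; apply Hnot; exact I.
      - destruct (Hl 0) as [N0 HN0]. exists 0, N0; split; [lra|]. exact HN0. }
    destruct Hq as [q [N0 [Hq1 HqN]]].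
    set (b := q^2).
    assert (Hb1 : b < 1).
    { unfold b. pose proof (HqN N0 (le_n _)). pose proof (Hu0 N0). nra. }
    assert (Hbnd : forall n, (N0 <= n)%nat -> (1 + 2*c)^2 * (INR n * xbar x n ^ 2) <= b).
    { intros n Hn. pose proof (HqN n Hn) as H1. pose proof (Hu0 n).
      assert (Hsq : u n ^ 2 = (1 + 2*c)^2 * (INR n * xbar x n ^ 2)).
      { unfold u. rewrite !Rpow_mult_distr.
        replace (sqrt (INR n) ^ 2) with (INR n) by (rewrite <- Rsqr_pow2, Rsqr_sqrt by apply pos_INR; reflexivity).
        replace (Rabs (xbar x n) ^ 2) with (xbar x n ^ 2) by (rewrite <- !Rsqr_pow2, <- Rsqr_abs; reflexivity).
        ring. }
      unfold b. rewrite <- Hsq. nra. }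
    set (N := Nat.max N0 1).
    set (eps := c/2*(1-b)).
    assert (Heps : 0 < eps) by (unfold eps; nra).
    assert (Hind : forall k, ln (capital c x N) + Phi c x N - Phi c x (N + k)
        + eps * (ln (INR (N + k)) - ln (INR N)) <= ln (capital c x (N + k))).
    { induction k as [|k IH].
      - rewrite Nat.add_0_r. lra.
      - rewrite Nat.add_succ_r, cap_rec.
        rewrite ln_mult by (try apply cap_pos; auto; pose proof (factor_ge c x hc0 hc1 Hp (N+k)%nat); lra).
        pose proof (step_ineq c b x (N + k)%nat hc0 hc1 Hb1 Hp ltac:(lia)
          (Hbnd (S (N+k)) ltac:(lia)) (Hbnd (N+k)%nat ltac:(lia))) as Hst.
        fold eps in Hst. lra. }
    assert (HPhi : forall n, (N <= n)%nat -> Phi c x n <= c/2 * b).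
    { intros n Hn. unfold Phi. apply Rmult_le_compat_l; [lra|].
      pose proof (Hbnd n ltac:(lia)).
      assert (0 <= INR n * xbar x n ^ 2) by (apply Rmult_le_pos; [apply pos_INR|nra]).
      nra. }
    set (C := ln (capital c x N) + Phi c x N - c/2*b - eps * ln (INR N)).
    assert (Hlow : forall n, (N <= n)%nat -> C + eps * ln (INR n) <= ln (capital c x n)).
    { intros n Hn. replace n with (N + (n - N))%nat by lia.
      pose proof (Hind (n - N)%nat). pose proof (HPhi (N + (n - N))%nat ltac:(lia)).
      unfold C. lra. }
    apply is_lim_seq_spec. intros M.
    set (T := (ln (Rmax M 1) - C) / eps).
    destruct (INR_archimed 1 (exp T) ltac:(lra)) as [n0 Hn0].
    exists (Nat.max N n0). intros n Hn.
    assert (HT : T < ln (INR n)).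
    { rewrite <- (ln_exp T). apply ln_increasing. apply exp_pos.
      pose proof (le_INR n0 n ltac:(lia)). lra. }
    pose proof (Hlow n ltac:(lia)) as Hl.
    assert (HR : 0 < Rmax M 1) by (pose proof (Rmax_r M 1); lra).
    assert (Hlt : ln (Rmax M 1) < ln (capital c x n)).
    { assert (Hm : eps * T < eps * ln (INR n)) by (apply Rmult_lt_compat_l; lra).
      replace (eps * T) with (ln (Rmax M 1) - C) in Hm by (unfold T; field; lra). lra. }
    pose proof (Rmax_l M 1) as HM1.
    pose proof (exp_increasing _ _ Hlt) as He.
    rewrite !exp_ln in He by (auto; apply cap_pos; auto). lra.
Qed.
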